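(* Let $b_r\ge0$ and $b=b_r\vee b^*$. Then $(\mu-\alpha G(x))\mathbf 1_{\{x>b\}}\le0$ for all $x\ge0$, and if $b_r>b^*$ then $\lim_{x\nearrow b}G''(x)>0$. Likewise, with $b=b_r\vee b^{**}$: $(\mu-\alpha H(x))\mathbf 1_{\{x>b\}}\le0$ for all $x\ge0$, and if $b_r>b^{**}$ then $\lim_{x\nearrow b}H''(x)>0$.
   Context: Fix parameters $\mu>0$, $\sigma>0$, $\alpha>0$ and $k>1$. Set $r_1:=-\frac{\mu}{\sigma^2}+\sqrt{\frac{\mu^2}{\sigma^4}+\frac{2\alpha}{\sigma^2}}$ and $r_2:=-\frac{\mu}{\sigma^2}-\sqrt{\frac{\mu^2}{\sigma^4}+\frac{2\alpha}{\sigma^2}}$ (so $r_2<0<r_1$ and $r_2^2>r_1^2$). Let $b^*:=\frac{\log(r_2^2/r_1^2)}{r_1-r_2}>0$ and let $b^{**}>0$ be the unique positive solution of $r_1e^{-r_2b}-r_2e^{-r_1b}=k(r_1-r_2)$. Write $G(x)=G(x;b_r)$ and $H(x)=H(x;b_r)$, where: with $b=b_r\vee b^*$, $G(x;b_r):=\frac{e^{r_1x}-e^{r_2x}}{r_1e^{r_1b}-r_2e^{r_2b}}$ for $0\le x\le b$ and $G(x;b_r):=x-b+\frac{e^{r_1b}-e^{r_2b}}{r_1e^{r_1b}-r_2e^{r_2b}}$ for $x>b$; with $b=b_r\vee b^{**}$, $H(x;b_r):=\frac{1}{e^{r_1b}-e^{r_2b}}\Big(\frac{1-ke^{r_2b}}{r_1}e^{r_1x}-\frac{1-ke^{r_1b}}{r_2}e^{r_2x}\Big)$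 for $0\le x\le b$ and $H(x;b_r):=x-b+\frac{1}{e^{r_1b}-e^{r_2b}}\Big(\frac{1-ke^{r_2b}}{r_1}e^{r_1b}-\frac{1-ke^{r_1b}}{r_2}e^{r_2b}\Big)$ for $x>b$. *)

(* Defs.v *)
From Stdlib Require Import Reals Lra.
Open Scope R_scope.

Definition r1 (mu sigma alpha : R) : R :=
  - mu / sigma ^ 2 + sqrt (mu ^ 2 / sigma ^ 4 + 2 * alpha / sigma ^ 2).
Definition r2 (mu sigma alpha : R) : R :=
  - mu / sigma ^ 2 - sqrt (mu ^ 2 / sigma ^ 4 + 2 * alpha / sigma ^ 2).

Definition bstar (mu sigma alpha : R) : R :=
  let a := r1 mu sigma alpha in let c := r2 mu sigma alpha in
  ln (c ^ 2 / a ^ 2) / (a - c).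

Definition bss_eq (mu sigma alpha k b : R) : Prop :=
  let a := r1 mu sigma alpha in let c := r2 mu sigma alpha in
  a * exp (- c * b) - c * exp (- a * b) = k * (a - c).

Definition Gfun (mu sigma alpha br x : R) : R :=
  let a := r1 mu sigma alpha in let c := r2 mu sigma alpha in
  let b := Rmax br (bstar mu sigma alpha) in
  if Rle_dec x b then
    (exp (a * x) - exp (c * x)) / (a * exp (a * b) - c * exp (c * b))
  else
    x - b + (exp (a * b) - exp (c * b)) / (a * exp (a * b) - c * exp (c * b)).

Definition Hfun (mu sigma alpha k bss br x : R) : R :=
  let a := r1 mu sigma alpha in let c := r2 mu sigma alpha in
  let b := Rmax br bss in
  if Rle_dec x b then
    / (exp (a * b) - exp (c * b)) *
      ((1 - k * exp (c * b)) / a * exp (a * x) - (1 - k * exp (a * b)) / c * exp (c * x))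
  else
    x - b + / (exp (a * b) - exp (c * b)) *
      ((1 - k * exp (c * b)) / a * exp (a * b) - (1 - k * exp (a * b)) / c * exp (c * b)).

Definition indicator {P : Prop} (d : {P} + {~ P}) : R := if d then 1 else 0.

Definition left_lim_second_deriv_pos (F : R -> R) (b : R) : Prop :=
  exists (F1 F2 : R -> R) (L : R), 0 < L /\
    (forall x, 0 < x < b -> derivable_pt_lim F x (F1 x) /\ derivable_pt_lim F1 x (F2 x)) /\
    (forall eps, 0 < eps -> exists delta, 0 < delta /\
        forall x, 0 < x < b -> b - delta < x -> Rabs (F2 x - L) < eps).

(* Main.v *)
Require Import Defs.
From Stdlib Require Import Reals Lra.
From Coquelicot Require Import Coquelicot.
Open Scope R_scope.

Lemma dexp2 (A B a c x : R) :
  derivable_pt_lim (fun y => A*exp(a*y)+B*exp(c*y)) x (A*a*exp(a*x)+B*c*exp(c*x)).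
Proof. apply is_derive_Reals. auto_derive; auto. ring. Qed.

Lemma dpl_local (f g : R -> R) x l d : 0 < d ->
  (forall y, Rabs (y - x) < d -> f y = g y) ->
  derivable_pt_lim g x l -> derivable_pt_lim f x l.
Proof.
  intros Hd Heq Hg eps Heps.
  destruct (Hg eps Heps) as [del Hdel].
  assert (Hm : 0 < Rmin del d) by (apply Rmin_pos; [apply cond_pos| lra]).
  exists (mkposreal _ Hm). intros h Hh Hlt. simpl in Hlt.
  rewrite (Heq x), (Heq (x+h)).
  - apply Hdel; auto. apply Rlt_le_trans with (1:=Hlt); apply Rmin_l.
  - replace (x+h-x) with h by ring. apply Rlt_le_trans with (1:=Hlt); apply Rmin_r.
  - replace (x-x) with 0 by ring. rewrite Rabs_R0; lra.
Qed.

Lemma r_facts mu sigma alpha : 0 < mu -> 0 < sigma -> 0 < alpha ->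
  0 < r1 mu sigma alpha /\ r2 mu sigma alpha < 0 /\
  sigma^2/2*(r1 mu sigma alpha)^2 + mu*r1 mu sigma alpha - alpha = 0 /\
  sigma^2/2*(r2 mu sigma alpha)^2 + mu*r2 mu sigma alpha - alpha = 0.
Proof.
  intros Hmu Hs Ha. unfold r1, r2.
  set (S := mu ^ 2 / sigma ^ 4 + 2 * alpha / sigma ^ 2).
  assert (Hs2 : 0 < sigma^2) by (apply pow_lt; lra).
  assert (HS1 : S = (mu/sigma^2)*(mu/sigma^2) + 2*alpha/sigma^2)
    by (unfold S; field; lra).
  assert (HS2 : 0 < 2*alpha/sigma^2) by (apply Rdiv_lt_0_compat; lra).
  assert (HS : 0 <= S) by nra.
  set (q := sqrt S).
  assert (Hq2 : q*q = S) by (apply sqrt_sqrt; auto).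
  assert (Hq0 : 0 <= q) by apply sqrt_pos.
  assert (Hm0 : 0 < mu/sigma^2) by (apply Rdiv_lt_0_compat; lra).
  split; [|split; [|split]].
  - unfold Rminus. assert (mu/sigma^2 < q) by nra. unfold Rdiv in *. lra.
  - unfold Rdiv in *. lra.
  - replace (sigma ^ 2 / 2 * (- mu / sigma ^ 2 + q) ^ 2 + mu * (- mu / sigma ^ 2 + q) - alpha)
      with (sigma^2/2*(q*q - S)) by (unfold S; field; lra).
    rewrite Hq2; ring.
  - replace (sigma ^ 2 / 2 * (- mu / sigma ^ 2 - q) ^ 2 + mu * (- mu / sigma ^ 2 - q) - alpha)
      with (sigma^2/2*(q*q - S)) by (unfold S; field; lra).
    rewrite Hq2; ring.
Qed.

Lemma part1 (f : R -> R) mu sigma alpha a c A B b :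
  0 < alpha ->
  sigma^2/2*a^2 + mu*a - alpha = 0 ->
  sigma^2/2*c^2 + mu*c - alpha = 0 ->
  (forall y, y <= b -> f y = A*exp(a*y)+B*exp(c*y)) ->
  (forall y, b < y -> f y = y - b + (A*exp(a*b)+B*exp(c*b))) ->
  A*a*exp(a*b)+B*c*exp(c*b) = 1 ->
  0 <= A*a^2*exp(a*b)+B*c^2*exp(c*b) ->
  forall x, (mu - alpha * f x) * indicator (Rlt_dec b x) <= 0.
Proof.
  intros Ha Hra Hrc Hf1 Hf2 H1 H2 x.
  unfold indicator. destruct (Rlt_dec b x) as [Hx|Hx]; [|lra].
  rewrite Hf2 by auto.
  assert (E : mu - alpha*(A*exp(a*b)+B*exp(c*b)) =
     - (sigma^2/2) * (A*a^2*exp(a*b)+B*c^2*exp(c*b))).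
  { apply Rminus_diag_uniq.
    replace (mu - alpha * (A * exp (a * b) + B * exp (c * b)) -
      - (sigma ^ 2 / 2) * (A * a ^ 2 * exp (a * b) + B * c ^ 2 * exp (c * b)))
    with (A*exp(a*b)*(sigma^2/2*a^2 + mu*a - alpha) + B*exp(c*b)*(sigma^2/2*c^2 + mu*c - alpha)
          + mu*(1 - (A*a*exp(a*b)+B*c*exp(c*b)))) by ring.
    rewrite Hra, Hrc, H1. ring. }
  assert (0 <= sigma^2/2) by (assert (0 <= sigma^2) by apply pow2_ge_0; lra).
  assert (0 <= sigma^2/2 * (A*a^2*exp(a*b)+B*c^2*exp(c*b))) by (apply Rmult_le_pos; auto).
  nra.
Qed.

Lemma part2 (f : R -> R) a c A B b :
  (forall y, y <= b -> f y = A*exp(a*y)+B*exp(c*y)) ->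
  0 < A*a^2*exp(a*b)+B*c^2*exp(c*b) ->
  left_lim_second_deriv_pos f b.
Proof.
  intros Hf HL.
  set (F1 := fun y => (A*a)*exp(a*y)+(B*c)*exp(c*y)).
  set (F2 := fun y => (A*a*a)*exp(a*y)+(B*c*c)*exp(c*y)).
  exists F1, F2, (F2 b). split; [|split].
  - unfold F2. replace (A*a^2*exp(a*b)+B*c^2*exp(c*b)) with
      (A * a * a * exp (a * b) + B * c * c * exp (c * b)) in HL by ring. exact HL.
  - intros x Hx. split.
    + apply dpl_local with (g := fun y => A*exp(a*y)+B*exp(c*y)) (d := b - x).
      * lra.
      * intros y Hy. apply Hf. apply Rabs_def2 in Hy. lra.
      * apply dexp2.
    + unfold F1, F2.
      replace (A * a * a * exp (a * x) + B * c * c * exp (c * x)) with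
        ((A*a)*a*exp(a*x)+(B*c)*c*exp(c*x)) by ring.
      apply dexp2.
  - intros eps Heps.
    assert (Hc : continuity_pt F2 b).
    { apply derivable_continuous_pt. exists ((A*a*a)*a*exp(a*b)+(B*c*c)*c*exp(c*b)).
      apply dexp2. }
    destruct (Hc eps Heps) as [del [Hdel H]].
    exists del. split; auto. intros x Hx Hxd.
    apply H. split.
    + split; [exact I| lra].
    + simpl. unfold Rdist. rewrite Rabs_left; lra.
Qed.


Lemma exp_le_mono x y : x <= y -> exp x <= exp y.
Proof. intros [H|H]; [left; apply exp_increasing; auto | subst; lra]. Qed.

Lemma expinv z : exp (- z) * exp z = 1.
Proof. rewrite <- exp_plus. replace (-z+z) with 0 by ring. apply exp_0. Qed.

Lemma Gsign a c b' : 0 < a -> c < 0 ->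
  (ln (c ^ 2 / a ^ 2) / (a - c) <= b' -> c^2*exp(c*b') <= a^2*exp(a*b')) /\
  (ln (c ^ 2 / a ^ 2) / (a - c) < b' -> c^2*exp(c*b') < a^2*exp(a*b')).
Proof.
  intros Ha Hc.
  assert (Hac : 0 < a - c) by lra.
  assert (Hq : 0 < c^2/a^2) by (apply Rdiv_lt_0_compat; nra).
  assert (Ha2 : 0 < a^2) by (apply pow_lt; lra).
  assert (HQ : 0 < exp (c*b')) by apply exp_pos.
  assert (HP : exp (a*b') = exp ((a-c)*b') * exp (c*b')).
  { rewrite <- exp_plus. f_equal. ring. }
  assert (Hm : ln (c^2/a^2) / (a - c) * (a - c) = ln (c^2/a^2)) by (field; lra).
  split; intro Hb.
  - assert (Hl : ln (c^2/a^2) <= (a-c)*b').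
    { rewrite <- Hm. rewrite (Rmult_comm (a-c)). apply Rmult_le_compat_r; lra. }
    apply exp_le_mono in Hl. rewrite exp_ln in Hl by auto.
    rewrite HP.
    assert (c^2 <= a^2 * exp ((a-c)*b')).
    { apply Rmult_le_compat_l with (r := a^2) in Hl; [|lra].
      replace (a^2*(c^2/a^2)) with (c^2) in Hl by (field; lra). lra. }
    nra.
  - assert (Hl : ln (c^2/a^2) < (a-c)*b').
    { rewrite <- Hm. rewrite (Rmult_comm (a-c)). apply Rmult_lt_compat_r; lra. }
    apply exp_increasing in Hl. rewrite exp_ln in Hl by auto.
    rewrite HP.
    assert (c^2 < a^2 * exp ((a-c)*b')).
    { apply Rmult_lt_compat_l with (r := a^2) in Hl; [|lra].
      replace (a^2*(c^2/a^2)) with (c^2) in Hl by (field; lra). lra. }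
    nra.
Qed.

Lemma phi_mono a c s t : 0 < a -> c < 0 -> 0 <= s -> s <= t ->
  a*exp(-c*s) - c*exp(-a*s) <= a*exp(-c*t) - c*exp(-a*t) /\
  (s < t -> a*exp(-c*s) - c*exp(-a*s) < a*exp(-c*t) - c*exp(-a*t)).
Proof.
  intros Ha Hc Hs Hst.
  set (d := t - s).
  assert (Hd : 0 <= d) by (unfold d; lra).
  replace t with (s + d) by (unfold d; ring).
  replace (-c*(s+d)) with (-c*s + -c*d) by ring.
  replace (-a*(s+d)) with (-a*s + -a*d) by ring.
  rewrite !exp_plus.
  set (X := exp (-c*s)). set (Y := exp (-a*s)). set (U := exp (-c*d)). set (V := exp(-a*d)).
  assert (HX : 1 <= X) by (unfold X; pose proof (exp_ineq1_le (-c*s)); nra).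
  assert (HY0 : 0 < Y) by apply exp_pos.
  assert (HY : Y <= 1) by (unfold Y; rewrite <- exp_0; apply exp_le_mono; nra).
  assert (HU : 1 + -c*d <= U) by apply exp_ineq1_le.
  assert (HV : 1 + -a*d <= V) by apply exp_ineq1_le.
  assert (HV1 : V <= 1) by (unfold V; rewrite <- exp_0; apply exp_le_mono; nra).
  assert (K1 : a*(-c*d) <= a*X*(U-1)).
  { assert (0 <= -c*d) by nra. assert (0 <= a*(-c*d)) by nra.
    assert (a*(-c*d) <= a*(U-1)) by nra. nra. }
  assert (K2 : -c*Y*(1-V) <= -c*(a*d)).
  { assert (0 <= 1 - V) by lra. assert (1 - V <= a*d) by lra.
    assert (Y*(1-V) <= 1 - V) by nra. nra. }
  assert (EQ : a * (X * U) - c * (Y * V) - (a * X - c * Y) = a*X*(U-1) - (-c*Y*(1-V))) by ring.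
  split.
  - lra.
  - intro Hlt. assert (Hd' : 0 < d) by lra.
    assert (HU' : 1 + -c*d < U) by (apply exp_ineq1; nra).
    assert (a*(-c*d) < a*(U-1)) by nra.
    assert (0 <= a*(U-1)) by nra. assert (a*(U-1) <= a*X*(U-1)) by nra. lra.
Qed.

Theorem mainTheorem9 (mu sigma alpha k bss br : R)
  (Hmu : 0 < mu) (Hsigma : 0 < sigma) (Halpha : 0 < alpha) (Hk : 1 < k)
  (Hbss_pos : 0 < bss) (Hbss_eq : bss_eq mu sigma alpha k bss)
  (Hbss_uniq : forall b, 0 < b -> bss_eq mu sigma alpha k b -> b = bss)
  (Hbr : 0 <= br) :
  (forall x, 0 <= x ->
     (mu - alpha * Gfun mu sigma alpha br x) *
       indicator (Rlt_dec (Rmax br (bstar mu sigma alpha)) x) <= 0) /\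
  (bstar mu sigma alpha < br ->
     left_lim_second_deriv_pos (Gfun mu sigma alpha br) (Rmax br (bstar mu sigma alpha))) /\
  (forall x, 0 <= x ->
     (mu - alpha * Hfun mu sigma alpha k bss br x) *
       indicator (Rlt_dec (Rmax br bss) x) <= 0) /\
  (bss < br ->
     left_lim_second_deriv_pos (Hfun mu sigma alpha k bss br) (Rmax br bss)).
Proof.
  destruct (r_facts mu sigma alpha Hmu Hsigma Halpha) as [Ha [Hc [Hra Hrc]]].
  unfold bss_eq in Hbss_eq. cbv zeta in Hbss_eq.
  unfold Gfun, Hfun, bstar. cbv zeta.
  set (a := r1 mu sigma alpha) in *. set (c := r2 mu sigma alpha) in *.
  clearbody a c.
  set (bs := ln (c ^ 2 / a ^ 2) / (a - c)).
  assert (Ga : forall b, 0 < a*exp(a*b) - c*exp(c*b)).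
  { intro b. assert (0 < exp (a*b)) by apply exp_pos. assert (0 < exp (c*b)) by apply exp_pos. nra. }
  assert (GG : forall b,
    (forall y, y <= b -> (if Rle_dec y b then (exp (a*y) - exp (c*y)) / (a*exp (a*b) - c*exp (c*b))
       else y - b + (exp (a*b) - exp (c*b)) / (a*exp (a*b) - c*exp (c*b)))
      = / (a*exp (a*b) - c*exp (c*b)) * exp (a*y) + - / (a*exp (a*b) - c*exp (c*b)) * exp (c*y))).
  { intros b y Hy. specialize (Ga b). destruct (Rle_dec y b); [field; lra | lra]. }
  assert (HE : forall b, 0 < b -> 0 < exp (a*b) - exp (c*b)).
  { intros b Hb. assert (exp (c*b) < exp (a*b)) by (apply exp_increasing; nra). lra. }
  assert (HS : forall b, bss <= b ->
     0 <= a*(1 - k*exp(c*b))*exp(a*b) - c*(1 - k*exp(a*b))*exp(c*b) /\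
     (bss < b -> 0 < a*(1 - k*exp(c*b))*exp(a*b) - c*(1 - k*exp(a*b))*exp(c*b))).
  { intros b Hb.
    destruct (phi_mono a c bss b Ha Hc ltac:(lra) Hb) as [P1 P2].
    assert (EQ : a*(1 - k*exp(c*b))*exp(a*b) - c*(1 - k*exp(a*b))*exp(c*b) =
      exp(a*b)*exp(c*b)*((a*exp(-c*b) - c*exp(-a*b)) - (a*exp(-c*bss) - c*exp(-a*bss)))).
    { rewrite Hbss_eq.
      replace (-c*b) with (-(c*b)) by ring. replace (-a*b) with (-(a*b)) by ring.
      pose proof (expinv (c*b)). pose proof (expinv (a*b)).
      transitivity (a*exp(a*b)*(exp (-(c*b))*exp(c*b)) - c*exp(c*b)*(exp (-(a*b))*exp(a*b))
         - k*(a-c)*exp(a*b)*exp(c*b)); [rewrite H, H0; ring | ring]. }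
    assert (0 < exp(a*b)*exp(c*b)) by (apply Rmult_lt_0_compat; apply exp_pos).
    rewrite EQ. split.
    - apply Rmult_le_pos; lra.
    - intro Hl. apply Rmult_lt_0_compat; [lra|]. specialize (P2 Hl). lra. }
  assert (HH : forall b, 0 < b ->
    (forall y, y <= b -> (if Rle_dec y b then / (exp (a * b) - exp (c * b)) *
      ((1 - k * exp (c * b)) / a * exp (a * y) - (1 - k * exp (a * b)) / c * exp (c * y))
      else y - b + / (exp (a * b) - exp (c * b)) *
      ((1 - k * exp (c * b)) / a * exp (a * b) - (1 - k * exp (a * b)) / c * exp (c * b)))
      = (/ (exp (a * b) - exp (c * b)) * ((1 - k * exp (c * b)) / a)) * exp (a*y)
        + (- (/ (exp (a * b) - exp (c * b)) * ((1 - k * exp (a * b)) / c))) * exp (c*y))).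
  { intros b Hb0 y Hy. specialize (HE b Hb0). destruct (Rle_dec y b); [field; lra | lra]. }
  assert (Hsq : forall b, 0 < b ->
    (/ (exp (a * b) - exp (c * b)) * ((1 - k * exp (c * b)) / a)) * a^2 * exp (a*b)
     + (- (/ (exp (a * b) - exp (c * b)) * ((1 - k * exp (a * b)) / c))) * c^2 * exp (c*b)
    = (a*(1 - k*exp(c*b))*exp(a*b) - c*(1 - k*exp(a*b))*exp(c*b)) * / (exp (a * b) - exp (c * b))).
  { intros b Hb0. specialize (HE b Hb0). field; lra. }
  split; [|split; [|split]].
  - intros x _.
    set (b := Rmax br bs).
    specialize (Ga b).
    apply (part1 (fun x => if Rle_dec x b then (exp (a*x) - exp (c*x)) / (a*exp (a*b) - c*exp (c*b))
       else x - b + (exp (a*b) - exp (c*b)) / (a*exp (a*b) - c*exp (c*b)))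
       mu sigma alpha a c (/ (a*exp (a*b) - c*exp (c*b))) (- / (a*exp (a*b) - c*exp (c*b))) b
       Halpha Hra Hrc).
    + apply GG.
    + intros y Hy. simpl. destruct (Rle_dec y b); [lra|]. field; lra.
    + field; lra.
    + assert (Hb : bs <= b) by apply Rmax_r.
      destruct (Gsign a c b Ha Hc) as [G1 _]. specialize (G1 Hb).
      replace (/ (a * exp (a * b) - c * exp (c * b)) * a ^ 2 * exp (a * b) +
        - / (a * exp (a * b) - c * exp (c * b)) * c ^ 2 * exp (c * b)) with
        ((a^2*exp(a*b) - c^2*exp(c*b)) * / (a * exp (a * b) - c * exp (c * b))) by (field; lra).
      apply Rmult_le_pos; [lra | left; apply Rinv_0_lt_compat; lra].
  - intro Hlt.
    set (b := Rmax br bs).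
    specialize (Ga b).
    apply (part2 _ a c (/ (a*exp (a*b) - c*exp (c*b))) (- / (a*exp (a*b) - c*exp (c*b))) b).
    + apply GG.
    + assert (Hb : bs < b) by (unfold b; rewrite Rmax_left; lra).
      destruct (Gsign a c b Ha Hc) as [_ G1]. specialize (G1 Hb).
      replace (/ (a * exp (a * b) - c * exp (c * b)) * a ^ 2 * exp (a * b) +
        - / (a * exp (a * b) - c * exp (c * b)) * c ^ 2 * exp (c * b)) with
        ((a^2*exp(a*b) - c^2*exp(c*b)) * / (a * exp (a * b) - c * exp (c * b))) by (field; lra).
      apply Rmult_lt_0_compat; [lra | apply Rinv_0_lt_compat; lra].
  - intros x _.
    set (b := Rmax br bss).
    assert (Hb : bss <= b) by apply Rmax_r.
    assert (Hb0 : 0 < b) by lra.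
    pose proof (HE b Hb0) as HEb.
    apply (part1 (fun y => if Rle_dec y b then / (exp (a * b) - exp (c * b)) *
      ((1 - k * exp (c * b)) / a * exp (a * y) - (1 - k * exp (a * b)) / c * exp (c * y))
      else y - b + / (exp (a * b) - exp (c * b)) *
      ((1 - k * exp (c * b)) / a * exp (a * b) - (1 - k * exp (a * b)) / c * exp (c * b)))
       mu sigma alpha a c (/ (exp (a * b) - exp (c * b)) * ((1 - k * exp (c * b)) / a))
       (- (/ (exp (a * b) - exp (c * b)) * ((1 - k * exp (a * b)) / c))) b
       Halpha Hra Hrc).
    + apply HH; auto.
    + intros y Hy. simpl. destruct (Rle_dec y b); [lra|]. field; lra.
    + field; lra.
    + rewrite Hsq by auto. apply Rmult_le_pos; [apply HS; auto | left; apply Rinv_0_lt_compat; lra].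
  - intro Hlt.
    set (b := Rmax br bss).
    assert (Hb : bss < b) by (unfold b; rewrite Rmax_left; lra).
    assert (Hb0 : 0 < b) by lra.
    pose proof (HE b Hb0) as HEb.
    apply (part2 _ a c (/ (exp (a * b) - exp (c * b)) * ((1 - k * exp (c * b)) / a))
       (- (/ (exp (a * b) - exp (c * b)) * ((1 - k * exp (a * b)) / c))) b).
    + apply HH; auto.
    + rewrite Hsq by auto. apply Rmult_lt_0_compat; [apply HS; lra | apply Rinv_0_lt_compat; lra].
Qed.
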